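(* Let $G=(V,E)$ be a simple undirected graph on $n$ nodes, let $0<\epsilon<\frac13$, $\delta>0$, $p\in(0,1)$, and let $D\subseteq V$ be an $\epsilon^3$-near clique with $|D|\ge\delta n$. Let $S$ be a random subset of $V$ containing each node independently with probability $p$. Then with probability at least $1-\frac{1}{\epsilon^2\delta}e^{-\Omega(\epsilon^4\delta\cdot pn)}$ over the selection of $S$, there exists a connected component $S_i$ of $G[S]$ and a set $X^*\subseteq S_i$ such that $|T_\epsilon(X^* )|\ge(1-\frac{13}{2}\epsilon)|D|-\epsilon^{-2}$.
   Context: $\Gamma(v)$ denotes the set of neighbors of $v$; $G[S]$ is the subgraph induced by $S$. For $Y\subseteq V$ and $0\le\eta\le1$: $K_\eta(Y)=\{v\in V: |\Gamma(v)\cap Y|\ge(1-\eta)|Y|\}$, and $T_\epsilon(X)=K_\epsilon(K_{2\epsilon^2}(X))\cap K_{2\epsilon^2}(X)$. Each undirected edge is counted as two directed edges; a set $D\subseteq V$ is a $\gamma$-near clique if $|\{(u,v)\in D\times D:\{u,v\}\in E\}|\ge(1-\gamma)|D|(|D|-1)$. $\Omega(\cdot)$ hides an absolute positive constant. *)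

(* Defs.v *)
From HB Require Import structures.
From mathcomp Require Import all_boot all_order all_algebra.
From mathcomp Require Import Rstruct.
From Stdlib Require Import Rdefinitions Rtrigo_def.
Set Implicit Arguments. Unset Strict Implicit. Unset Printing Implicit Defensive.
Import Order.TTheory GRing.Theory Num.Theory.
Local Open Scope ring_scope.

Section Graphs.
Variable T : finType.

Definition simple_graph (e : rel T) : Prop := symmetric e /\ irreflexive e.

Definition nbhd (e : rel T) (v : T) : {set T} := [set u | e v u].

Definition Kset (e : rel T) (eta : R) (Y : {set T}) : {set T} :=
  [set v | (1 - eta) * (#|Y|%:R) <= (#|nbhd e v :&: Y|%:R : R)].

Definition Tset (e : rel T) (eps : R) (X : {set T}) : {set T} :=
  Kset e eps (Kset e (2 * eps ^+ 2) X) :&: Kset e (2 * eps ^+ 2) X.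

Definition dir_edges (e : rel T) (D : {set T}) : nat :=
  #|[set uv : T * T | [&& uv.1 \in D, uv.2 \in D & e uv.1 uv.2]]|.

Definition near_clique (e : rel T) (gamma : R) (D : {set T}) : Prop :=
  (1 - gamma) * (#|D|%:R * (#|D|%:R - 1)) <= ((dir_edges e D)%:R : R).

Definition induced (e : rel T) (S : {set T}) : rel T :=
  [rel x y | [&& x \in S, y \in S & e x y]].

Definition component (e : rel T) (S : {set T}) (x : T) : {set T} :=
  [set y in S | connect (induced e S) x y].

(* Probability of an event over the random subset S in which each node is
   included independently with probability p *)
Definition prob_subset (p : R) (P : {set T} -> bool) : R :=
  \sum_(S : {set T} | P S) p ^+ #|S| * (1 - p) ^+ (#|T| - #|S|).

End Graphs.

(* Main.v *)
Require Import Defs.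
From HB Require Import structures.
From mathcomp Require Import all_boot all_order all_algebra.
From mathcomp Require Import Rstruct.
From Stdlib Require Import Rdefinitions Rtrigo_def.
From Stdlib Require Import Reals.
From mathcomp Require Import ring lra zify.
Set Implicit Arguments. Unset Strict Implicit. Unset Printing Implicit Defensive.
Import Order.TTheory GRing.Theory Num.Theory.
Local Open Scope ring_scope.


Section Dev.
#[local] Arguments exp x%_ring_scope.

Lemma exp_gt0 (x : R) : 0 < exp x.
Proof. by apply/RltP; apply: exp_pos. Qed.

Lemma exp_ge1D (x : R) : 1 + x <= exp x.
Proof. by apply/RleP; apply: exp_ineq1_le. Qed.

Lemma exp_le (x y : R) : x <= y -> exp x <= exp y.
Proof.
rewrite le_eqVlt => /orP [/eqP -> //| /RltP h].
by apply/ltW/RltP; apply: exp_increasing.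
Qed.

Lemma exp_ge1 (x : R) : 0 <= x -> 1 <= exp x.
Proof. by move=> hx; apply: le_trans (exp_ge1D x); lra. Qed.

Lemma expD (x y : R) : exp (x + y) = exp x * exp y.
Proof. by rewrite expRD. Qed.

Lemma expN (x : R) : exp (- x) = (exp x)^-1.
Proof.
have h : exp x * exp (- x) = 1 by rewrite -expD subrr expR0.
have hx := exp_gt0 x.
by rewrite -[LHS]mul1r -(mulVf (lt0r_neq0 hx)) -mulrA h mulr1.
Qed.

Lemma exp_nat (x : R) (n : nat) : exp (x * n%:R) = exp x ^+ n.
Proof.
elim: n => [|n IH]; first by rewrite expr0 mulr0 expR0.
by rewrite -addn1 natrD mulrDr mulr1 expD IH exprD expr1.
Qed.

Definition w (T : finType) (p : R) (S : {set T}) : R :=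
  \prod_(x : T) (if x \in S then p else 1 - p).

Lemma wE (T : finType) (p : R) (S : {set T}) :
  p ^+ #|S| * (1 - p) ^+ (#|T| - #|S|) = w p S.
Proof.
rewrite /w (bigID (fun x => x \in S)) /=.
rewrite (eq_bigr (fun _ => p)); last by move=> x ->.
rewrite [X in _ = _ * X](eq_bigr (fun _ => 1 - p)); last by move=> x /negbTE ->.
rewrite !prodr_const; congr (_ ^+ _ * _ ^+ _).
rewrite -(cardsC S) addKn; apply: eq_card => x; by rewrite !inE.
Qed.

Lemma prob_subsetE (T : finType) (p : R) (P : {set T} -> bool) :
  prob_subset p P = \sum_(S | P S) w p S.
Proof. by apply: eq_bigr => S _; rewrite wE. Qed.

Lemma w_ge0 (T : finType) (p : R) (S : {set T}) : 0 <= p <= 1 -> 0 <= w p S.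
Proof.
move=> /andP [h0 h1]; apply: prodr_ge0 => x _; case: (x \in S) => //; lra.
Qed.

Lemma sum_prod (T : finType) (p : R) (g : T -> bool -> R) :
  \sum_(S : {set T}) w p S * \prod_(x : T) g x (x \in S)
  = \prod_(x : T) (p * g x true + (1 - p) * g x false).
Proof.
rewrite bigA_distr; apply: eq_bigr => S _.
rewrite /w -big_split /=; apply: eq_bigr => x _.
by case: (x \in S).
Qed.

Lemma sum_w (T : finType) (p : R) : \sum_(S : {set T}) w p S = 1.
Proof.
have h := @sum_prod T p (fun _ _ => 1).
transitivity (\prod_(x : T) (p * 1 + (1 - p) * 1)).
  by rewrite -h; apply: eq_bigr => S _; rewrite big1 ?mulr1.
by apply: big1 => x _; ring.
Qed.

Lemma prod_if_const (T : finType) (P : pred T) (c : R) :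
  \prod_(x : T) (if P x then c else 1) = c ^+ #|P|.
Proof. by rewrite -big_mkcond prodr_const. Qed.

Lemma prod_if_set (T : finType) (A : {set T}) (c : R) :
  \prod_(x : T) (if x \in A then c else 1) = c ^+ #|A|.
Proof. by rewrite -big_mkcond prodr_const. Qed.

Lemma mgf (T : finType) (p : R) (B : {set T}) (l : R) :
  \sum_(S : {set T}) w p S * exp (l * #|S :&: B|%:R)
  = (1 - p + p * exp l) ^+ #|B|.
Proof.
have h := @sum_prod T p (fun x b => if b && (x \in B) then exp l else 1).
transitivity (\prod_(x : T) (p * (if true && (x \in B) then exp l else 1)
           + (1 - p) * (if false && (x \in B) then exp l else 1))).
  rewrite -h; apply: eq_bigr => S _; congr (_ * _).
  rewrite exp_nat -prod_if_set; apply: eq_bigr => x _.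
  by rewrite inE.
rewrite -prod_if_set; apply: eq_bigr => x _ /=.
case: (x \in B); ring.
Qed.

Lemma mgf_v (T : finType) (p : R) (B : {set T}) (l : R) (v : T) :
  v \notin B ->
  \sum_(S : {set T}) w p S * ((v \in S)%:R * exp (l * #|S :&: B|%:R))
  = p * (1 - p + p * exp l) ^+ #|B|.
Proof.
move=> vB.
have h := @sum_prod T p (fun x b => (if x == v then b%:R else 1) *
                                    (if b && (x \in B) then exp l else 1)).
transitivity (\prod_(x : T) (p * ((if x == v then true%:R else 1) *
                                  (if true && (x \in B) then exp l else 1))
       + (1 - p) * ((if x == v then false%:R else 1) *
                    (if false && (x \in B) then exp l else 1)))).
  rewrite -h; apply: eq_bigr => S _; congr (_ * _).
  rewrite big_split /=; congr (_ * _).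
    rewrite (bigD1 v) //= eqxx big1 ?mulr1 // => x /negbTE -> //.
  rewrite exp_nat -prod_if_set; apply: eq_bigr => x _.
  by rewrite inE.
rewrite (bigD1 v) //= eqxx.
have -> : (p * (1 * (if v \in B then exp l else 1)) + (1 - p) * (0 * 1)) = p.
  by case: ifP => [hv|_]; [move: vB; rewrite hv | ring].
congr (_ * _).
rewrite -prod_if_set [RHS](bigD1 v) //=.
case: ifP => [hv|_]; first by move: vB; rewrite hv.
rewrite mul1r; apply: eq_bigr => x /negbTE -> /=; case: ifP => _; ring.
Qed.

Lemma sum_le_ind (T : finType) (p : R) (P : pred {set T}) (f : {set T} -> R) :
  0 <= p <= 1 -> (forall S, 0 <= f S) -> (forall S, P S -> 1 <= f S) ->
  \sum_(S | P S) w p S <= \sum_(S : {set T}) w p S * f S.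
Proof.
move=> hp f0 fP; rewrite big_mkcond /=; apply: ler_sum => S _.
have w0 := w_ge0 S hp.
case: ifP => PS; last by apply: mulr_ge0.
by rewrite -{1}[w p S]mulr1; apply: ler_wpM2l => //; apply: fP.
Qed.

Lemma exp_le1s (s : R) : 0 < s -> exp (s / (1 + s)) <= 1 + s.
Proof.
move=> s0.
have h1 : 1 - s / (1 + s) <= exp (- (s / (1 + s))).
  by apply: le_trans (exp_ge1D _); lra.
rewrite expN in h1.
have e0 := exp_gt0 (s / (1 + s)).
have hq : 1 - s / (1 + s) = (1 + s)^-1.
  by field; lra.
rewrite hq in h1.
rewrite -(invrK (exp _)) -[X in _ <= X]invrK.
by rewrite lef_pV2 ?posrE ?invr_gt0 //; lra.
Qed.

Lemma expN_le (s : R) : 0 < s -> exp (- s) <= (1 + s)^-1.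
Proof.
move=> s0; rewrite expN lef_pV2 ?posrE ?exp_gt0 //; last lra.
exact: exp_ge1D.
Qed.

Lemma pow_le_exp (q a : R) (n : nat) : 0 <= q -> q <= exp a ->
  q ^+ n <= exp (a * n%:R).
Proof.
move=> q0 qa; rewrite exp_nat; apply: lerXn2r => //; rewrite ?nnegrE //.
exact: ltW (exp_gt0 _).
Qed.

Lemma upper_tail (T : finType) (p : R) (B : {set T}) (s k b0 : R) :
  0 <= p <= 1 -> 0 < s -> 0 <= k -> #|B|%:R <= b0 ->
  \sum_(S | k <= #|S :&: B|%:R) w p S <= exp (p * s * b0 - k * (s / (1 + s))).
Proof.
move=> hp s0 k0 hb.
set l := s / (1 + s).
have l0 : 0 < l by rewrite /l divr_gt0 //; lra.
apply: le_trans (sum_le_ind (f := fun S => exp (l * #|S :&: B|%:R) * exp (- (l * k))) hp _ _) _.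
- by move=> S; rewrite mulr_ge0 // ltW // exp_gt0.
- move=> S hS; rewrite -expD; apply: exp_ge1.
  by rewrite subr_ge0; apply: ler_wpM2l => //; apply: ltW.
rewrite (eq_bigr (fun S => (w p S * exp (l * #|S :&: B|%:R)) * exp (- (l * k))));
  last by move=> S _; rewrite mulrA.
rewrite -big_distrl /= mgf.
have hl := exp_le1s s0.
move: hp => /andP [hp0 hp1].
have hq0 : 0 <= 1 - p + p * exp l by have := exp_gt0 l; nra.
have hq : 1 - p + p * exp l <= exp (p * s).
  apply: le_trans (exp_ge1D _); rewrite -/l in hl; nra.
have := pow_le_exp #|B| hq0 hq => h.
rewrite (_ : p * s * b0 - k * l = p * s * b0 + - (l * k)); last by ring.
rewrite expD; apply: ler_wpM2r; first exact: ltW (exp_gt0 _).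
apply: le_trans h _; apply: exp_le.
have hps : 0 <= p * s by apply: mulr_ge0; lra.
nra.
Qed.

Lemma upper_tail_v (T : finType) (p : R) (B : {set T}) (v : T) (s k b0 : R) :
  0 <= p <= 1 -> 0 < s -> 0 <= k -> #|B|%:R <= b0 -> v \notin B ->
  \sum_(S : {set T} | (v \in S) && (k <= #|S :&: B|%:R)) w p S
    <= p * exp (p * s * b0 - k * (s / (1 + s))).
Proof.
move=> hp s0 k0 hb vB.
set l := s / (1 + s).
have l0 : 0 < l by rewrite /l divr_gt0 //; lra.
apply: le_trans (sum_le_ind (f := fun S => ((v \in S)%:R * exp (l * #|S :&: B|%:R)) * exp (- (l * k))) hp _ _) _.
- by move=> S; rewrite !mulr_ge0 // ?ler0n // ltW // exp_gt0.
- move=> S /andP [-> hS]; rewrite mul1r -expD; apply: exp_ge1.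
  by rewrite subr_ge0; apply: ler_wpM2l => //; apply: ltW.
rewrite (eq_bigr (fun S => (w p S * ((v \in S)%:R * exp (l * #|S :&: B|%:R))) * exp (- (l * k))));
  last by move=> S _; rewrite mulrA.
rewrite -big_distrl /= mgf_v //.
have hl := exp_le1s s0.
move: hp => /andP [hp0 hp1].
have hq0 : 0 <= 1 - p + p * exp l by have := exp_gt0 l; nra.
have hq : 1 - p + p * exp l <= exp (p * s).
  apply: le_trans (exp_ge1D _); rewrite -/l in hl; nra.
have := pow_le_exp #|B| hq0 hq => h.
rewrite (_ : p * s * b0 - k * l = p * s * b0 + - (l * k)); last by ring.
rewrite expD mulrA; apply: ler_wpM2r; first exact: ltW (exp_gt0 _).
apply: ler_wpM2l => //.
apply: le_trans h _; apply: exp_le.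
have hps : 0 <= p * s by apply: mulr_ge0; lra.
nra.
Qed.

Lemma lower_tail (T : finType) (p : R) (B : {set T}) (s k b0 : R) :
  0 <= p <= 1 -> 0 < s -> 0 <= b0 -> b0 <= #|B|%:R ->
  \sum_(S | #|S :&: B|%:R <= k) w p S <= exp (- (p * b0 * (s / (1 + s))) + s * k).
Proof.
move=> hp s0 b00 hb.
apply: le_trans (sum_le_ind (f := fun S => exp ((- s) * #|S :&: B|%:R) * exp (s * k)) hp _ _) _.
- by move=> S; rewrite mulr_ge0 // ltW // exp_gt0.
- move=> S hS; rewrite -expD; apply: exp_ge1.
  rewrite mulNr addrC subr_ge0; apply: ler_wpM2l => //; lra.
rewrite (eq_bigr (fun S => (w p S * exp (- s * #|S :&: B|%:R)) * exp (s * k)));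
  last by move=> S _; rewrite mulrA.
rewrite -big_distrl /= mgf.
have hl := expN_le s0.
move: hp => /andP [hp0 hp1].
have e0 := exp_gt0 (- s).
have hq0 : 0 <= 1 - p + p * exp (- s) by nra.
have hi : (1 + s)^-1 = 1 - s / (1 + s) by field; lra.
rewrite hi in hl.
have hq : 1 - p + p * exp (- s) <= exp (- (p * (s / (1 + s)))).
  apply: le_trans (exp_ge1D _); nra.
have := pow_le_exp #|B| hq0 hq => h.
rewrite expD; apply: ler_wpM2r; first exact: ltW (exp_gt0 _).
apply: le_trans h _; apply: exp_le.
have : 0 <= p * (s / (1 + s)) by rewrite mulr_ge0 // divr_ge0 //; lra.
rewrite mulNr mulrAC; nra.
Qed.

Lemma count_markov (T : finType) (p : R) (V0 : {set T})
  (P : T -> {set T} -> bool) (th : R) :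
  0 <= p <= 1 -> 0 < th ->
  \sum_(S : {set T} | th < #|[set v in V0 | P v S]|%:R) w p S
    <= (\sum_(v in V0) \sum_(S : {set T} | P v S) w p S) / th.
Proof.
move=> hp th0.
apply: le_trans (sum_le_ind (f := fun S => #|[set v in V0 | P v S]|%:R / th) hp _ _) _.
- by move=> S; rewrite divr_ge0 // ltW.
- by move=> S hS; rewrite ler_pdivlMr // mul1r ltW.
rewrite (eq_bigr (fun S => (w p S * #|[set v in V0 | P v S]|%:R) / th));
  last by move=> S _; rewrite mulrA.
rewrite -big_distrl /=; apply: ler_wpM2r; first by rewrite invr_ge0 ltW.
rewrite le_eqVlt; apply/orP; left; apply/eqP.
have hc : forall S, #|[set v in V0 | P v S]|%:R = \sum_(v in V0) ((P v S)%:R : R).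
  move=> S; rewrite -sum1_card natr_sum big_mkcond [RHS]big_mkcond /=.
  apply: eq_bigr => v _; rewrite inE; case: (v \in V0); case: (P v S) => //.
under eq_bigr => S _ do rewrite hc big_distrr /=.
rewrite exchange_big /=; apply: eq_bigr => v _.
rewrite [RHS]big_mkcond /=; apply: eq_bigr => S _.
by case: (P v S); rewrite ?mulr1 ?mulr0.
Qed.

Lemma prob_compl (T : finType) (p : R) (P : pred {set T}) :
  \sum_(S | P S) w p S = 1 - \sum_(S | ~~ P S) w p S.
Proof.
by rewrite -(sum_w T p) (bigID P predT) /= addrK.
Qed.

Lemma union2 (T : finType) (p : R) (P Q1 Q2 : pred {set T}) :
  0 <= p <= 1 -> (forall S, Q1 S -> Q2 S -> P S) ->
  \sum_(S | ~~ P S) w p S <= \sum_(S | ~~ Q1 S) w p S + \sum_(S | ~~ Q2 S) w p S.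
Proof.
move=> hp h; rewrite !(big_mkcond (fun S => ~~ _)) -big_split /=.
apply: ler_sum => S _; have w0 := w_ge0 S hp.
case: (boolP (P S)) => PS /=.
  by case: (Q1 S); case: (Q2 S); rewrite /= ?addr0 ?add0r // addr_ge0.
case: (boolP (Q1 S)) => q1 /=; last by rewrite lerDl; case: (Q2 S).
case: (boolP (Q2 S)) => q2 /=; last by rewrite add0r.
by move: PS; rewrite h.
Qed.

End Dev.


Section Dev2.

Definition Mset (T : finType) (e : rel T) (A : {set T}) (v : T) : {set T} :=
  A :\: nbhd e v.

Lemma cardsU_le (T : finType) (A B : {set T}) : (#|A :|: B| <= #|A| + #|B|)%nat.
Proof. rewrite cardsU; exact: leq_subr. Qed.

Lemma card_miss (T : finType) (e : rel T) (Y : {set T}) (v : T) :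
  #|nbhd e v :&: Y|%:R = #|Y|%:R - (#|Y :\: nbhd e v|%:R : R).
Proof.
have h := cardsID (nbhd e v) Y.
by rewrite setIC -h natrD addrK.
Qed.

Lemma inK (T : finType) (e : rel T) (eta : R) (Y : {set T}) (v : T) :
  (v \in Kset e eta Y) = (#|Y :\: nbhd e v|%:R <= eta * #|Y|%:R).
Proof.
rewrite inE card_miss; apply/idP/idP => h; lra.
Qed.

Lemma card_sum (T : finType) (A : {set T}) (P : pred T) :
  #|[set x in A | P x]| = (\sum_(x in A) P x)%nat.
Proof.
rewrite -sum1_card big_mkcond [RHS]big_mkcond /=.
by apply: eq_bigr => x _; rewrite inE; case: (x \in A); case: (P x).
Qed.

Lemma double_count (T : finType) (e : rel T) (P Q : {set T}) :
  symmetric e ->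
  (\sum_(u in P) #|Q :\: nbhd e u| = \sum_(w in Q) #|P :\: nbhd e w|)%nat.
Proof.
move=> sym.
have h : forall (P Q : {set T}) u, Q :\: nbhd e u = [set w in Q | ~~ e u w].
  by move=> P0 Q0 u; apply/setP => w; rewrite !inE andbC.
have h2 : forall (Q0 : {set T}) u, #|Q0 :\: nbhd e u| = (\sum_(w in Q0) ~~ e u w)%nat.
  by move=> Q0 u; rewrite (h P); apply: (card_sum Q0 (fun w => ~~ e u w)).
under eq_bigr => u _ do rewrite h2.
under [RHS]eq_bigr => w _ do rewrite h2.
rewrite exchange_big /=; apply: eq_bigr => w _; apply: eq_bigr => u _.
by rewrite sym.
Qed.

Lemma sub_sumR (T : finType) (P Q : {set T}) (f : T -> R) :
  P \subset Q -> (forall x, 0 <= f x) -> \sum_(x in P) f x <= \sum_(x in Q) f x.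
Proof.
move=> /subsetP PQ f0; rewrite big_mkcond [X in _ <= X]big_mkcond /=.
apply: ler_sum => x _; case: (boolP (x \in P)) => xP; first by rewrite (PQ x xP).
by case: (x \in Q).
Qed.

Lemma sub_sumR' (T : finType) (P Q : {set T}) (f : T -> R) :
  P \subset Q -> (forall x, x \in Q -> 0 <= f x) -> \sum_(x in P) f x <= \sum_(x in Q) f x.
Proof.
move=> /subsetP PQ f0; rewrite big_mkcond [X in _ <= X]big_mkcond /=.
apply: ler_sum => x _; case: (boolP (x \in P)) => xP; first by rewrite (PQ x xP).
by case: (boolP (x \in Q)) => // /f0.
Qed.

Lemma card_leR (T : finType) (P Q : {set T}) :
  P \subset Q -> (#|P|%:R : R) <= #|Q|%:R.
Proof. by move=> h; rewrite ler_nat subset_leq_card. Qed.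

Lemma cardU_leR (T : finType) (P Q : {set T}) :
  (#|P :|: Q|%:R : R) <= #|P|%:R + #|Q|%:R.
Proof. by rewrite -natrD ler_nat cardsU_le. Qed.

Lemma det (T : finType) (e : rel T) (D A S : {set T}) (eps p a mu nu : R) :
  symmetric e -> 0 < eps -> eps < 3^-1 -> 0 < p -> A \subset D ->
  a = #|A|%:R -> mu = p * a -> nu = eps^+2 * mu ->
  (1 - eps) * #|D|%:R <= a -> 100 <= nu ->
  9/10 * mu < #|S :&: A|%:R ->
  #|S :&: A|%:R <= 11/10 * mu ->
  #|[set v in A | 17/10 * nu <= #|S :&: Mset e A v|%:R]|%:R <= eps / 10 * a ->
  #|[set v in A | (v \in S) && (17/10 * nu <= #|S :&: Mset e A v|%:R)]|%:R <= nu / 100 ->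
  #|[set w in [set: T] | (5/2 * eps^+2 * a <= #|Mset e A w|%:R) &&
        (#|S :&: Mset e A w|%:R <= 221/100 * nu)]|%:R <= eps^+2 * #|D|%:R / 100 ->
  [exists x in S, exists X : {set T}, (X \subset component e S x) &&
     ((1 - 13 / 2 * eps) * #|D|%:R - (eps ^+ 2)^-1 <= (#|Tset e eps X|%:R : R))].
Proof.
move=> sym e0 e3 p0 AD ha hmu hnu haD hnu100 hQ1 hQ2 hQ3 hQ4 hQ5.
set Z := S :&: A.
set B1 := [set v in A | 17/10 * nu <= #|S :&: Mset e A v|%:R] in hQ3 *.
set B2 := [set w in [set: T] | _] in hQ5.
set X := Z :\: B1.
have hSB1 : [set v in A | (v \in S) && (17/10 * nu <= #|S :&: Mset e A v|%:R)] = S :&: B1.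
  by apply/setP => v; rewrite !inE; case: (v \in A); case: (v \in S).
rewrite hSB1 in hQ4.
have hZB1 : Z :&: B1 = S :&: B1.
  by apply/setP => v; rewrite !inE; case: (v \in A); case: (v \in S).
have hX : #|X|%:R = #|Z|%:R - (#|S :&: B1|%:R : R).
  by have := cardsID B1 Z; rewrite hZB1 -/X => <-; rewrite natrD; ring.
have hZmiss : forall v, Z :\: nbhd e v = S :&: Mset e A v.
  by move=> v; apply/setP => z; rewrite !inE; case: (e v z); case: (z \in S).
have hXm : forall v, (#|X :\: nbhd e v|%:R : R) <= #|S :&: Mset e A v|%:R.
  by move=> v; rewrite -hZmiss; apply: card_leR; apply: setSD; apply: subsetDl.
have a0 : 0 <= a by rewrite ha ler0n.
have mu0 : 0 <= mu by rewrite hmu mulr_ge0 // ltW.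
have e2 : eps ^+ 2 <= 9^-1.
  by rewrite expr2; nra.
have e2p : 0 < eps ^+ 2 by rewrite exprn_gt0.
have hR2 : Rmult 2 (eps ^+ 2) = 2 * eps ^+ 2 by rewrite RmultE IZRposE INRE.
have hmu9 : 9 * nu <= mu by rewrite hnu; nra.
have hSB1ge : 0 <= (#|S :&: B1|%:R : R) by rewrite ler0n.
have hXge : 88/100 * mu <= #|X|%:R by rewrite hX; lra.
have hXle : (#|X|%:R : R) <= #|Z|%:R by rewrite hX; lra.
have inX : forall x, x \in X -> [/\ x \in S, x \in A &
           (#|S :&: Mset e A x|%:R : R) < 17/10 * nu].
  move=> x; rewrite !inE => /and3P [hb xS xA]; split => //.
  by move: hb; rewrite xA /= -ltNge.
have conn : forall x y, x \in X -> y \in X -> connect (induced e S) x y.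
  move=> x y xX yX.
  have [xS xA hx] := inX x xX; have [yS yA hy] := inX y yX.
  case: (boolP [exists z, (z \in Z) && (e x z && e y z)]).
    move=> /existsP [z /and3P [zZ exz eyz]].
    have zS : z \in S by move: zZ; rewrite inE => /andP [].
    apply: (@connect_trans _ _ z x y); apply: connect1; rewrite /induced /= ?xS ?zS ?yS //=.
    by rewrite sym.
  move=> /existsPn hn.
  have hsub : Z \subset (Z :\: nbhd e x) :|: (Z :\: nbhd e y).
    apply/subsetP => z zZ; have := hn z; rewrite zZ /= in_setU !in_setD zZ !andbT !inE.
    by case: (e x z); case: (e y z).
  have := card_leR hsub; have := cardU_leR (Z :\: nbhd e x) (Z :\: nbhd e y).
  rewrite !hZmiss => h1 h2; lra.
have Xn0 : X != set0.
  rewrite -card_gt0 -(ltr_nat R); apply: lt_le_trans hXge; lra.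
have [x xX] := set0Pn _ Xn0.
have [xS _ _] := inX x xX.
apply/existsP; exists x; rewrite xS /=; apply/existsP; exists X; apply/andP; split.
  apply/subsetP => y yX; have [yS _ _] := inX y yX.
  by rewrite inE yS conn.
set Y := Kset e (2 * eps ^+ 2) X.
set Astar := A :\: B1.
have hAY : Astar \subset Y.
  apply/subsetP => u; rewrite in_setD => /andP [hb uA].
  have hu : (#|S :&: Mset e A u|%:R : R) < 17/10 * nu by move: hb; rewrite inE uA /= -ltNge.
  rewrite inK; apply: le_trans (ltW (le_lt_trans (hXm u) hu)) _.
  have h := ler_wpM2l (ltW e2p) hXge; rewrite hnu hR2; nra.
have hYw : forall w, w \in Y -> (#|S :&: Mset e A w|%:R : R) <= 221/100 * nu.
  move=> w; rewrite inK => hw.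
  have hsub : S :&: Mset e A w \subset (X :\: nbhd e w) :|: (S :&: B1).
    apply/subsetP => z; rewrite /Mset in_setI in_setD => /and3P [zS zn zA].
    rewrite in_setU in_setD zn /= in_setI zS /=.
    case: (boolP (z \in B1)) => zB; rewrite ?orbT // orbF.
    by rewrite in_setD zB in_setI zS zA.
  have := card_leR hsub; have := cardU_leR (X :\: nbhd e w) (S :&: B1).
  move=> h1 h2.
  have : 2 * eps ^+ 2 * #|X|%:R <= 2 * eps ^+ 2 * (11/10 * mu).
    by apply: ler_wpM2l; [rewrite mulr_ge0 // ltW | lra].
  rewrite hR2 in hw; rewrite hnu in hQ4 *; lra.
have hMw : forall w, w \in Y -> w \notin B2 ->
    (#|Mset e A w|%:R : R) < 5/2 * eps ^+ 2 * a.
  move=> w wY; rewrite !inE (hYw w wY) andbT -ltNge //.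
set U := [set u in Astar | eps * #|Y|%:R < #|Y :\: nbhd e u|%:R].
have hdc := double_count Astar Y sym.
have hL : #|U|%:R * (eps * #|Y|%:R) <= \sum_(u in Astar) (#|Y :\: nbhd e u|%:R : R).
  have hc : #|U|%:R * (eps * #|Y|%:R) = \sum_(u in U) (eps * #|Y|%:R : R).
    by rewrite sumr_const mulr_natl.
  rewrite hc; apply: (@le_trans _ _ (\sum_(u in U) (#|Y :\: nbhd e u|%:R : R))).
    apply: ler_sum => u; rewrite inE => /andP [_ h]; exact: ltW.
  apply: sub_sumR; last by move=> u; rewrite ler0n.
  by apply/subsetP => u; rewrite inE => /andP [].
have hR : \sum_(w in Y) (#|Astar :\: nbhd e w|%:R : R)
          <= #|B2|%:R * a + #|Y|%:R * (5/2 * eps ^+ 2 * a).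
  apply: le_trans (_ : \sum_(w in Y) ((w \in B2)%:R * a + 5/2 * eps ^+ 2 * a) <= _).
    apply: ler_sum => w wY.
    have hle : (#|Astar :\: nbhd e w|%:R : R) <= #|Mset e A w|%:R.
      apply: card_leR; apply: setSD; exact: subsetDl.
    case: (boolP (w \in B2)) => wB2.
      rewrite mul1r; apply: le_trans hle _.
      have : (#|Mset e A w|%:R : R) <= a by rewrite ha; apply: card_leR; apply: subsetDl.
      have : 0 <= eps ^+ 2 * a by rewrite mulr_ge0 // ltW.
      lra.
    by rewrite mul0r add0r; apply: le_trans hle _; apply: ltW; apply: hMw.
  rewrite big_split /= -big_distrl /= sumr_const -[_ *+ _]mulr_natr mulrC.
  have hs : \sum_(i in Y) ((i \in B2)%:R : R) <= #|B2|%:R.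
    rewrite -natr_sum ler_nat.
    have := card_sum Y (fun x => x \in B2) => /= <-.
    by apply: subset_leq_card; apply/subsetP => w; rewrite inE => /andP [].
  have := ler_wpM2l a0 hs; lra.
have hsum : \sum_(u in Astar) (#|Y :\: nbhd e u|%:R : R)
          = \sum_(w in Y) (#|Astar :\: nbhd e w|%:R : R).
  by rewrite -!natr_sum hdc.
have hB1A : A :&: B1 = B1.
  by apply/setP => v; rewrite !inE; case: (v \in A).
have hAs : #|Astar|%:R = a - (#|B1|%:R : R).
  by have := cardsID B1 A; rewrite hB1A -/Astar ha => <-; rewrite natrD; ring.
have hY : 9/10 * a <= #|Y|%:R.
  have := card_leR hAY; rewrite hAs => h.
  have : 0 <= (1/30 - eps / 10) * a by apply: mulr_ge0 => //; lra.
  lra.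
have hU : #|U|%:R <= eps * #|D|%:R / 90 + 5/2 * eps * a.
  have apos : 0 < a by rewrite hmu in hmu9; nra.
  have hYe : 0 < eps * #|Y|%:R by apply: mulr_gt0 => //; lra.
  have hB2a : #|B2|%:R * a <= eps^+2 * #|D|%:R / 100 * (10/9 * #|Y|%:R).
    apply: ler_pM => //; rewrite ?ler0n //; lra.
  have h1 : #|U|%:R * (eps * #|Y|%:R)
            <= (eps * #|D|%:R / 90 + 5/2 * eps * a) * (eps * #|Y|%:R).
    rewrite hsum in hL; have h3 := le_trans hL hR.
    have -> : (eps * #|D|%:R / 90 + 5/2 * eps * a) * (eps * #|Y|%:R)
       = eps^+2 * #|D|%:R / 100 * (10/9 * #|Y|%:R) + #|Y|%:R * (5/2 * eps ^+ 2 * a).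
      by field.
    lra.
  by rewrite ler_pM2r in h1.
have hAT : Astar :\: U \subset Tset e eps X.
  apply/subsetP => u; rewrite in_setD => /andP [hU' hb].
  have uY : u \in Y by apply: (subsetP hAY).
  rewrite /Tset -/Y in_setI uY andbT inK.
  by move: hU'; rewrite inE hb /= -leNgt.
have hUA : Astar :&: U = U by apply/setIidPr; apply/subsetP => u; rewrite in_set => /andP [].
have hT : #|Astar :\: U|%:R = #|Astar|%:R - (#|U|%:R : R).
  by have := cardsID U Astar; rewrite hUA => <-; rewrite natrD; ring.
have := card_leR hAT; rewrite hT hAs => hfin.
have am : a <= #|D|%:R by rewrite ha; apply: card_leR.
have hinv : 0 <= (eps^+2)^-1 by rewrite invr_ge0 ltW.
have k1 : 0 <= (a - (1 - eps) * #|D|%:R) * (1 - 13/5 * eps) by apply: mulr_ge0; lra.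
have k2 : 0 <= eps^+2 * #|D|%:R by rewrite mulr_ge0 // ltW.
have k3 : 0 <= eps * #|D|%:R by rewrite mulr_ge0 // ltW.
have k4 : 0 <= eps * a by rewrite mulr_ge0 // ltW.
rewrite expr2 in k2.
nra.
Qed.

Lemma dir_edgesE (T : finType) (e : rel T) (D : {set T}) :
  dir_edges e D = (\sum_(u in D) #|D :&: nbhd e u|)%nat.
Proof.
rewrite /dir_edges.
have -> : [set uv : T * T | [&& uv.1 \in D, uv.2 \in D & e uv.1 uv.2]]
   = [set uv in [set: T * T] | [&& uv.1 \in D, uv.2 \in D & e uv.1 uv.2]].
  by apply/setP => uv; rewrite !inE.
rewrite (card_sum [set: T * T] (fun uv => [&& uv.1 \in D, uv.2 \in D & e uv.1 uv.2])).
rewrite (eq_bigl predT); last by move=> uv; rewrite inE.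
rewrite -(pair_bigA _ (fun u v => [&& u \in D, v \in D & e u v]:nat)) /=.
rewrite [RHS]big_mkcond /=; apply: eq_bigr => u _.
case: (boolP (u \in D)) => uD /=; last by rewrite big1.
have -> : D :&: nbhd e u = [set v in [set: T] | (v \in D) && e u v].
  by apply/setP => v; rewrite !inE.
by rewrite card_sum; apply: eq_bigl => v; rewrite inE.
Qed.

Definition Aset (T : finType) (e : rel T) (eps : R) (D : {set T}) : {set T} :=
  [set v in D | #|D|%:R - 1 - #|D :&: nbhd e v|%:R <= eps^+2 * #|D|%:R].

Lemma deg_le (T : finType) (e : rel T) (D : {set T}) (u : T) :
  irreflexive e -> u \in D -> (#|D :&: nbhd e u|%:R : R) <= #|D|%:R - 1.
Proof.
move=> irr uD.
have hs : D :&: nbhd e u \subset D :\ u.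
  apply/subsetP => v; rewrite !inE => /andP [vD euv]; rewrite vD andbT.
  by apply/eqP => h; move: euv; rewrite h irr.
have := card_leR hs; have := cardsD1 u D; rewrite uD => ->.
rewrite natrD /= ; lra.
Qed.

Lemma near_A (T : finType) (e : rel T) (eps : R) (D : {set T}) :
  irreflexive e -> 0 < eps -> near_clique e (eps ^+ 3) D ->
  (1 - eps) * #|D|%:R <= #|Aset e eps D|%:R.
Proof.
move=> irr e0 hnc.
set m : R := #|D|%:R.
set A := Aset e eps D.
set f := fun u => m - 1 - (#|D :&: nbhd e u|%:R : R).
have f0 : forall u, u \in D -> 0 <= f u by move=> u uD; have := deg_le irr uD; rewrite /f; lra.
have hsum : \sum_(u in D) f u = m * (m - 1) - (dir_edges e D)%:R.
  rewrite /f big_split /= sumr_const sumrN dir_edgesE natr_sum -mulr_natr /m; ring.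
have hAD : D :&: A = A.
  by apply/setIidPr; apply/subsetP => v; rewrite in_set => /andP [].
have hcard : #|A|%:R = m - (#|D :\: A|%:R : R).
  by have := cardsID A D; rewrite hAD /m => <-; rewrite natrD; ring.
have hlow : #|D :\: A|%:R * (eps^+2 * m) <= \sum_(u in D) f u.
  apply: le_trans (_ : \sum_(u in D :\: A) f u <= _); last first.
    by apply: sub_sumR'; [apply: subsetDl | exact: f0].
  have -> : #|D :\: A|%:R * (eps^+2 * m) = \sum_(u in D :\: A) (eps^+2 * m)
    by rewrite sumr_const mulr_natl.
  apply: ler_sum => u; rewrite in_setD => /andP [uA uD].
  by move: uA; rewrite /A /Aset in_set uD /= -ltNge => h; apply: ltW.
move: hnc; rewrite /near_clique -/m => hnc.
have hk : (#|D :\: A|%:R : R) <= m by apply: card_leR; apply: subsetDl.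
have hk0 : (0 : R) <= #|D :\: A|%:R by rewrite ler0n.
rewrite hcard.
case: (boolP (0 < m)) => hm; last first.
  have : m <= 0 by rewrite leNgt.
  have : 0 <= m by rewrite /m ler0n.
  nra.
have hm2 : 0 < eps^+2 * m by rewrite mulr_gt0 // exprn_gt0.
have : eps^+2 * m * (#|D :\: A|%:R - eps * (m - 1)) <= 0.
  rewrite hsum in hlow; rewrite !exprS expr0 mulr1 in hm2 hnc *; nra.
rewrite pmulr_rle0 // => h; nra.
Qed.

End Dev2.


Section Dev3.
#[local] Arguments exp x%_ring_scope.

Lemma M_bound (T : finType) (e : rel T) (eps : R) (D : {set T}) (v : T) :
  v \in Aset e eps D ->
  (#|Mset e (Aset e eps D) v|%:R : R) <= eps^+2 * #|D|%:R + 1.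
Proof.
move=> vA.
have AD : Aset e eps D \subset D by apply/subsetP => u; rewrite in_set => /andP [].
have h1 := card_leR (setSD (nbhd e v) AD).
have h2 := cardsID (nbhd e v) D.
move: vA; rewrite in_set => /andP [_ hv].
rewrite /Mset; apply: le_trans h1 _.
have : (#|D :\: nbhd e v|%:R : R) = #|D|%:R - #|D :&: nbhd e v|%:R.
  by rewrite -h2 natrD; ring.
move=> ->; lra.
Qed.

Lemma sum_sub (T : finType) (p : R) (P1 P2 : pred {set T}) :
  0 <= p <= 1 -> (forall S, P1 S -> P2 S) ->
  \sum_(S | P1 S) w p S <= \sum_(S | P2 S) w p S.
Proof.
move=> hp h; rewrite big_mkcond [X in _ <= X]big_mkcond /=.
apply: ler_sum => S _; have := w_ge0 S hp.
case: (boolP (P1 S)) => h1; first by rewrite (h S h1).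
by case: (P2 S).
Qed.

Lemma exp_m2 : 9^-1 <= exp (- 2).
Proof.
have h3 : exp 1 <= 3 by apply/RleP; exact: exp_le_3.
have hpos := exp_gt0 1.
have h2 : exp 2 <= 9.
  have := exp_nat 1 2; rewrite mul1r => ->.
  rewrite expr2; nra.
rewrite expN lef_pV2 ?posrE ?exp_gt0 //.
Qed.

Lemma exp_8 : 256 <= exp 8.
Proof.
have h1 : 2 <= exp 1 by apply: le_trans (exp_ge1D _); lra.
have := exp_nat 1 8; rewrite mul1r => ->.
apply: le_trans (_ : 2 ^+ 8 <= _).
  by rewrite !exprS expr0; lra.
by apply: lerXn2r; rewrite ?nnegrE //; lra.
Qed.

Ltac purge := repeat match goal with H : _ |- _ => clear H end.

Lemma core (T : finType) (e : rel T) (eps delta p : R) (D : {set T}) :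
  symmetric e -> irreflexive e -> (0 < #|T|)%nat ->
  0 < eps -> eps < 3^-1 -> 0 < delta -> 0 < p -> p < 1 ->
  near_clique e (eps ^+ 3) D -> delta * #|T|%:R <= #|D|%:R ->
  1 - (eps ^+ 2 * delta)^-1 * exp (- ((1000%:R)^-1 * (eps ^+ 4 * delta * (p * #|T|%:R))))
    <= \sum_(S : {set T} | [exists x in S, exists X : {set T},
              (X \subset component e S x) &&
              ((1 - 13 / 2 * eps) * #|D|%:R - (eps ^+ 2)^-1
                 <= (#|Tset e eps X|%:R : R))]) w p S.
Proof.
move=> sym irr nT e0 e3 d0 p0 p1 hnc hD.
have haD0 := near_A irr e0 hnc.
set n : R := #|T|%:R in hD *.
set m : R := #|D|%:R in hD haD0 *.
set E := eps ^+ 4 * delta * (p * n).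
set q := eps ^+ 2 * delta.
pose good := fun S : {set T} => [exists x in S, exists X : {set T},
              (X \subset component e S x) &&
              ((1 - 13 / 2 * eps) * m - (eps ^+ 2)^-1
                 <= (#|Tset e eps X|%:R : R))].
change (1 - q^-1 * exp (- ((1000%:R)^-1 * E)) <= \sum_(S | good S) w p S).
have hp : 0 <= p <= 1 by apply/andP; split; apply: ltW.
have npos : 0 < n by rewrite /n ltr0n.
have mn : m <= n by rewrite /m /n ler_nat max_card.
have m0 : 0 <= m by rewrite /m ler0n.
have d1 : delta <= 1.
  have : delta * n <= 1 * n by move: hD mn; purge; lra.
  by rewrite ler_pM2r.
have e2 : eps ^+ 2 <= 9^-1 by rewrite expr2; move: e0 e3; purge; nra.
have e2p : 0 < eps ^+ 2 by rewrite exprn_gt0.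
have qpos : 0 < q by rewrite /q mulr_gt0.
have q9 : q <= 9^-1.
  by rewrite /q; have := ler_wpM2l (ltW e2p) d1; move: e2; purge; lra.
have prob0 : 0 <= \sum_(S | good S) w p S.
  by apply: sumr_ge0 => S _; apply: w_ge0.
case: (boolP (1 <= q^-1 * exp (- ((1000%:R)^-1 * E)))) => hL.
  by move: hL prob0; purge; lra.
have hL1 : q^-1 * exp (- ((1000%:R)^-1 * E)) < 1 by rewrite ltNge.
have hcE : 2 < (1000%:R)^-1 * E.
  rewrite ltNge; apply/negP => h.
  have h1 : exp (- 2) <= exp (- ((1000%:R)^-1 * E)) by apply: exp_le; move: h; purge; lra.
  have := exp_m2 => h2.
  move: hL1; rewrite mulrC ltr_pdivrMr // mul1r; move: h1 h2 q9; purge; lra.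
set A := Aset e eps D in haD0 *.
set a : R := #|A|%:R in haD0 *.
set mu := p * a.
set nu := eps ^+ 2 * mu.
have haD : (1 - eps) * m <= a := haD0.
have AD : A \subset D by apply/subsetP => u; rewrite in_set => /andP [].
have a0 : 0 <= a by rewrite /a ler0n.
have am : a <= m by apply: card_leR.
have pe2 : 0 <= p * eps ^+ 2 by rewrite mulr_ge0 // ltW.
have k1 : 2/3 * m <= a.
  have := ler_wpM2r m0 (ltW e3); move: haD; purge; lra.
have hnu : 6 * E <= nu.
  have k2 : 2/3 * (delta * n) <= a by move: k1 hD; purge; lra.
  have k3 := ler_wpM2l pe2 k2.
  have G0 : 0 <= eps ^+ 2 * delta * p * n.
    by rewrite !mulr_ge0 // ltW.
  have k4 : E <= 9^-1 * (eps ^+ 2 * delta * p * n).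
    have -> : E = eps ^+ 2 * (eps ^+ 2 * delta * p * n) by rewrite /E; ring.
    by apply: ler_wpM2r.
  have -> : nu = p * eps ^+ 2 * a by rewrite /nu /mu; ring.
  have e' : p * eps ^+ 2 * (2 / 3 * (delta * n)) = 2/3 * (eps ^+ 2 * delta * p * n).
    by ring.
  rewrite e' in k3.
  move: k3 k4; purge; lra.
have nu100 : 100 <= nu by move: hnu hcE; purge; lra.
have mu0 : 0 <= mu by rewrite /mu mulr_ge0 // ltW.
have hmu9 : 9 * nu <= mu.
  by rewrite /nu; have := ler_wpM2r mu0 e2; purge; lra.
have apos : 0 < a.
  rewrite ltNge; apply/negP => h.
  have : mu <= 0 by rewrite /mu; apply: mulr_ge0_le0 => //; apply: ltW.
  by move: hmu9 nu100; purge; lra.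
have mpos : 0 < m by move: apos am; purge; lra.
pose Q1 := fun S : {set T} => 9/10 * mu < #|S :&: A|%:R.
pose Q2 := fun S : {set T} => #|S :&: A|%:R <= 11/10 * mu.
pose Q3 := fun S : {set T} =>
  #|[set v in A | 17/10 * nu <= #|S :&: Mset e A v|%:R]|%:R <= eps / 10 * a.
pose Q4 := fun S : {set T} =>
  #|[set v in A | (v \in S) && (17/10 * nu <= #|S :&: Mset e A v|%:R)]|%:R <= nu / 100.
pose Q5 := fun S : {set T} =>
  #|[set w in [set: T] | (5/2 * eps^+2 * a <= #|Mset e A w|%:R) &&
        (#|S :&: Mset e A w|%:R <= 221/100 * nu)]|%:R <= eps^+2 * m / 100.
have hdet : forall S, Q1 S -> Q2 S -> Q3 S -> Q4 S -> Q5 S -> good S.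
  move=> S h1 h2 h3 h4 h5.
  by apply: (@det T e D A S eps p a mu nu sym e0 e3 p0 AD).
pose R4 := fun S : {set T} => Q4 S && Q5 S.
pose R3 := fun S : {set T} => Q3 S && R4 S.
pose R2 := fun S : {set T} => Q2 S && R3 S.
have u1 := @union2 T p good Q1 R2 hp
  (fun S h1 h2 => let: conj a2 b := andP h2 in let: conj a3 c := andP b in
                  let: conj a4 a5 := andP c in hdet S h1 a2 a3 a4 a5).
have u2 := @union2 T p R2 Q2 R3 hp (fun S h1 h2 => introT andP (conj h1 h2)).
have u3 := @union2 T p R3 Q3 R4 hp (fun S h1 h2 => introT andP (conj h1 h2)).
have u4 := @union2 T p R4 Q4 Q5 hp (fun S h1 h2 => introT andP (conj h1 h2)).
set Xb := exp (- (nu / 250)).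
have Xb0 : 0 <= Xb by rewrite ltW // exp_gt0.
have [s hsd] : exists s, s = 1/20 :> R by eexists.
have hs : s / (1 + s) = 1/21 :> R by rewrite hsd; field.
have s0 : 0 < s by rewrite hsd; purge; lra.
have b1 : \sum_(S | ~~ Q1 S) w p S <= Xb.
  apply: le_trans (@sum_sub T p _ (fun S => #|S :&: A|%:R <= 9/10 * mu) hp _) _.
    by move=> S; rewrite /Q1 -leNgt.
  rewrite /=; apply: le_trans (lower_tail (B := A) (s := s) _ hp s0 a0 (le_refl _)) _.
  apply: exp_le; rewrite hs hsd -/mu; move: hmu9 nu100; purge; lra.
have b2 : \sum_(S | ~~ Q2 S) w p S <= Xb.
  apply: le_trans (@sum_sub T p _ (fun S => 11/10 * mu <= #|S :&: A|%:R) hp _) _.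
    by move=> S; rewrite /Q2 -ltNge => /ltW.
  rewrite /=; apply: le_trans (upper_tail (B := A) (s := s) hp s0 _ (le_refl _)) _.
    by move: mu0; purge; lra.
  apply: exp_le; rewrite hs hsd.
  have -> : p * (1/20) * a = mu / 20 by rewrite /mu; field.
  by move: hmu9 nu100; purge; lra.
have hpm : p * eps ^+ 2 * m <= 3/2 * nu.
  have : m <= 3/2 * a by move: k1; purge; lra.
  move/(ler_wpM2l pe2); rewrite /nu /mu => h; move: h; purge; lra.
have hpm0 : 0 <= p * eps ^+ 2 * m by rewrite mulr_ge0.
have b3 : \sum_(S | ~~ Q3 S) w p S <= 10 * eps^-1 * Xb.
  apply: le_trans (@sum_sub T p _ (fun S => eps / 10 * a <
     #|[set v in A | 17/10 * nu <= #|S :&: Mset e A v|%:R]|%:R) hp _) _.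
    by move=> S; rewrite /Q3 -ltNge.
  have th0 : 0 < eps / 10 * a by rewrite mulr_gt0 // divr_gt0.
  rewrite /=; apply: le_trans (count_markov A (fun v S => 17/10 * nu <= #|S :&: Mset e A v|%:R) hp th0) _.
  rewrite ler_pdivrMr //.
  have -> : 10 * eps^-1 * Xb * (eps / 10 * a) = a * Xb.
    by field; apply: lt0r_neq0.
  apply: le_trans (_ : \sum_(v in A) Xb <= _); last by rewrite sumr_const mulr_natl.
  apply: ler_sum => v vA.
  apply: le_trans (upper_tail (B := Mset e A v) (s := s) hp s0 _ (M_bound vA)) _.
    by move: nu100; purge; lra.
  apply: exp_le; rewrite hs hsd; move: hpm nu100 p1 p0 hpm0; purge; lra.
have cardv : forall (M S : {set T}) v,
    (#|S :&: M|%:R : R) <= #|S :&: (M :\ v)|%:R + 1.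
  move=> M S v.
  have hsub : S :&: M \subset (S :&: (M :\ v)) :|: [set v].
    apply/subsetP => z; rewrite !inE => /andP [zS zM].
    by rewrite zS zM /= andbT; case: (z == v).
  have := card_leR hsub; have := cardU_leR (S :&: (M :\ v)) [set v].
  rewrite cards1; purge; lra.
have b4 : \sum_(S | ~~ Q4 S) w p S <= 100 * (eps ^+ 2)^-1 * Xb.
  apply: le_trans (@sum_sub T p _ (fun S => nu / 100 <
     #|[set v in A | (v \in S) && (17/10 * nu <= #|S :&: Mset e A v|%:R)]|%:R) hp _) _.
    by move=> S; rewrite /Q4 -ltNge.
  have th0 : 0 < nu / 100 by move: nu100; purge; lra.
  rewrite /=; apply: le_trans (count_markov A
     (fun v S => (v \in S) && (17/10 * nu <= #|S :&: Mset e A v|%:R)) hp th0) _.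
  rewrite ler_pdivrMr //.
  have -> : 100 * (eps ^+ 2)^-1 * Xb * (nu / 100) = a * (p * Xb).
    by rewrite /nu /mu; field; apply: lt0r_neq0.
  apply: le_trans (_ : \sum_(v in A) (p * Xb) <= _); last by rewrite sumr_const mulr_natl.
  apply: ler_sum => v vA.
  apply: le_trans (@sum_sub T p _ (fun S => (v \in S) &&
      (17/10 * nu - 1 <= #|S :&: (Mset e A v :\ v)|%:R)) hp _) _.
    move=> S /andP [-> h] /=; have := cardv (Mset e A v) S v; move: h; purge; lra.
  have hB : #|Mset e A v :\ v|%:R <= eps ^+ 2 * m + 1.
    apply: le_trans (M_bound vA); apply: card_leR; exact: subsetDl.
  have vB : v \notin Mset e A v :\ v by rewrite in_setD1 eqxx.
  rewrite /=; apply: le_trans (upper_tail_v (s := s) hp s0 _ hB vB) _.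
    by move: nu100; purge; lra.
  apply: ler_wpM2l; first exact: ltW.
  apply: exp_le; rewrite hs hsd; move: hpm nu100 p1 p0 hpm0; purge; lra.
have b5 : \sum_(S | ~~ Q5 S) w p S <= 100 * q^-1 * Xb.
  apply: le_trans (@sum_sub T p _ (fun S => eps^+2 * m / 100 <
     #|[set w in [set: T] | (5/2 * eps^+2 * a <= #|Mset e A w|%:R) &&
        (#|S :&: Mset e A w|%:R <= 221/100 * nu)]|%:R) hp _) _.
    by move=> S; rewrite /Q5 -ltNge.
  have th0 : 0 < eps^+2 * m / 100 by rewrite divr_gt0 // mulr_gt0.
  rewrite /=; apply: le_trans (count_markov [set: T]
     (fun w S => (5/2 * eps^+2 * a <= #|Mset e A w|%:R) &&
        (#|S :&: Mset e A w|%:R <= 221/100 * nu)) hp th0) _.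
  rewrite ler_pdivrMr //.
  have -> : 100 * q^-1 * Xb * (eps^+2 * m / 100) = (m / delta) * Xb.
    by rewrite /q; field; apply/andP; split; apply: lt0r_neq0.
  apply: le_trans (_ : \sum_(v in [set: T]) Xb <= _).
    apply: ler_sum => v _.
    case: (boolP (5/2 * eps^+2 * a <= #|Mset e A v|%:R)) => hv; last first.
      by rewrite big_pred0 // => S.
    apply: le_trans (@sum_sub T p _ (fun S =>
       #|S :&: Mset e A v|%:R <= 221/100 * nu) hp _) _.
      by move=> S /andP [].
    have b00 : 0 <= 5/2 * eps^+2 * a.
      by apply: mulr_ge0 => //; apply: mulr_ge0 => //; [lra | apply: ltW].
    rewrite /=; apply: le_trans (lower_tail (B := Mset e A v) (s := s) _ hp s0 b00 hv) _.
    apply: exp_le; rewrite hs hsd.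
    have -> : p * (5 / 2 * eps ^+ 2 * a) = 5/2 * nu by rewrite /nu /mu; ring.
    by move: nu100; purge; lra.
  rewrite sumr_const cardsT -mulr_natl -/n; apply: ler_wpM2r => //.
  by rewrite ler_pdivlMr // mulrC.
have hbad : \sum_(S | ~~ good S) w p S <=
    Xb + (Xb + (10 * eps^-1 * Xb + (100 * (eps ^+ 2)^-1 * Xb + 100 * q^-1 * Xb))).
  apply: le_trans u1 _; apply: lerD => //.
  apply: le_trans u2 _; apply: lerD => //.
  apply: le_trans u3 _; apply: lerD => //.
  by apply: le_trans u4 _; apply: lerD.
have e1 : eps <= 1 by move: e3; purge; lra.
have qe2 : q <= eps ^+ 2 by rewrite /q; have := ler_wpM2l (ltW e2p) d1; rewrite mulr1.
have qe : q <= eps.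
  apply: le_trans qe2 _; rewrite expr2; have := ler_wpM2l (ltW e0) e1.
  by rewrite mulr1.
have i1 : 1 <= q^-1.
  by rewrite -[X in X <= _]invr1 lef_pV2 ?posrE //; move: q9; purge; lra.
have i2 : eps^-1 <= q^-1 by rewrite lef_pV2 ?posrE.
have i3 : (eps ^+ 2)^-1 <= q^-1 by rewrite lef_pV2 ?posrE.
have j1 := ler_wpM2r Xb0 i1.
have j2 := ler_wpM2r Xb0 i2.
have j3 := ler_wpM2r Xb0 i3.
have h256 : 256 * Xb <= exp (- ((1000%:R)^-1 * E)).
  have hX : Xb <= exp (- ((1000%:R)^-1 * E)) * exp (- 8).
    rewrite -expD; apply: exp_le; rewrite /nu.
    move: hnu hcE; rewrite /nu; purge; lra.
  have h8 : exp (- 8) <= 256^-1.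
    rewrite expN lef_pV2 ?posrE ?exp_gt0 //; first exact: exp_8.
  have eE := exp_gt0 (- ((1000%:R)^-1 * E)).
  have := ler_wpM2l (ltW eE) h8.
  move: hX eE; purge => hX eE h.
  have : exp (- ((1000%:R)^-1 * E)) * 256^-1 * 256 = exp (- ((1000%:R)^-1 * E)) by field.
  nra.
have qi0 : 0 <= q^-1 by rewrite invr_ge0 ltW.
have h212 := ler_wpM2l qi0 h256.
rewrite prob_compl.
move: hbad j1 j2 j3 h212 Xb0 qi0; purge; nra.
Qed.

End Dev3.


Theorem lemma5p6 :
  exists c : R, 0 < c /\
  forall (T : finType) (e : rel T), simple_graph e -> (0 < #|T|)%nat ->
  forall (eps delta p : R) (D : {set T}),
    0 < eps -> eps < 3^-1 -> 0 < delta -> 0 < p -> p < 1 ->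
    near_clique e (eps ^+ 3) D ->
    delta * #|T|%:R <= #|D|%:R ->
    1 - (eps ^+ 2 * delta)^-1 * exp (- (c * eps ^+ 4 * delta * (p * #|T|%:R)))
      <= prob_subset p (fun S : {set T} =>
           [exists x in S, exists X : {set T},
              (X \subset component e S x) &&
              ((1 - 13 / 2 * eps) * #|D|%:R - (eps ^+ 2)^-1
                 <= (#|Tset e eps X|%:R : R))]).
Proof.
exists ((1000%:R)^-1); split; first by rewrite invr_gt0 ltr0n.
move=> T e [sym irr] nT eps delta p D e0 e3 d0 p0 p1 hnc hD.
rewrite prob_subsetE.
have H := core sym irr nT e0 e3 d0 p0 p1 hnc hD.
by rewrite !RmultE RoppE !mulrA in H *.
Qed.
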